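(* Let $u(x,t)$ and $\Phi_n=(\varphi_1,\ldots,\varphi_n)$ be a (smooth) solution of the KdV equation with self-consistent sources of degree $n$, $$u_t+6uu_x+u_{xxx}+4\sum_{j=1}^n\varphi_j\varphi_{j,x}=0,\qquad \varphi_{j,xx}+(\lambda_j+u)\varphi_j=0,\ j=1,\ldots,n,$$ with distinct real constants $\lambda_1,\ldots,\lambda_n$. Let $\xi\notin\{\lambda_1,\ldots,\lambda_n\}$ and let $f$ be a solution of the Lax system $$\phi_{xx}+(\lambda+u)\phi=0,\qquad \phi_t=A_n(\lambda,u,\Phi_n)\phi$$ with $\lambda=\xi$ (belonging to a family $f(x,t;\xi)$ of such solutions depending smoothly on $\xi$, so that $\omega(f,f)$ below is defined). Let $\lambda\neq\xi$ and let $\phi$ be a solution of the same Lax system with spectral parameter $\lambda$. Let $e(t)$ be an arbitrary differentiable function of $t$ and define $$\bar\phi=\phi-\frac{f\,\omega(f,\phi)}{e(t)+\omega(f,f)},\qquad \bar u=u+2\partial_x^2\ln[e(t)+\omega(f,f)],\qquad \bar\varphi_j=\varphi_j-\frac{f\,\omega(f,\varphi_j)}{e(t)+\omega(f,f)},\ j=1,\ldots,n,$$ and $\bar\Phi_n=(\bar\varphi_1,\ldots,\bar\varphi_n)$. Then $$\phi_t-\frac{f_t\,\omega(f,\phi)}{e(t)+\omega(f,f)}+\frac{f\,\partial_t\omega(f,f)}{[e(t)+\omega(f,f)]^2}\,\omega(f,\phi)-\frac{f\,\partial_t\omega(f,\phi)}{e(t)+\omega(f,f)}=A_n(\lambda,\bar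 u,\bar\Phi_n)\bar\phi .$$ (For constant $e(t)\equiv C$ the left-hand side equals $\bar\phi_t$.)
   Context: All functions are functions of $(x,t)$. $W(g,h)=g h_x-g_x h$ denotes the Wronskian. For a spectral parameter $\lambda$ and $\Phi_n=(\varphi_1,\ldots,\varphi_n)$ with $\varphi_j$ associated to $\lambda_j$, the operator $A_n$ is $$A_n(\lambda,u,\Phi_n)\phi=u_x\phi+(4\lambda-2u)\phi_x+\sum_{j=1}^n\frac{\varphi_j}{\lambda_j-\lambda}W(\varphi_j,\phi).$$ If $f$ solves $f_{xx}+(\xi+u)f=0$ and $g$ solves $g_{xx}+(\eta+u)g=0$ with $\eta\neq\xi$, then $\omega(f,g)=\dfrac{W(f,g)}{\xi-\eta}$ (in particular $\omega(f,\phi)=W(f,\phi)/(\xi-\lambda)$ and $\omega(f,\varphi_j)=W(f,\varphi_j)/(\xi-\lambda_j)$). If $f=f(x,t;\xi)$ depends smoothly on $\xi$, then $\omega(f,f)=\lim_{\eta\to\xi}\frac{W(f(\xi),f(\eta))}{\xi-\eta}=-W(f,\partial_\xi f)$; it satisfies $\partial_x\omega(f,f)=f^2$. *)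

(* Defs.v *)
From Stdlib Require Import Reals List.
From Coquelicot Require Import Coquelicot.
Open Scope R_scope.

Definition dx (g : R -> R -> R) : R -> R -> R :=
  fun x t => Derive (fun y => g y t) x.
Definition dt (g : R -> R -> R) : R -> R -> R :=
  fun x t => Derive (fun s => g x s) t.

Fixpoint pder2 (ds : list bool) (g : R -> R -> R) : R -> R -> R :=
  match ds with
  | nil => g
  | b :: ds' => if b then dx (pder2 ds' g) else dt (pder2 ds' g)
  end.

Definition smooth2 (g : R -> R -> R) : Prop :=
  forall ds x t,
    ex_derive (fun y => pder2 ds g y t) x /\
    ex_derive (fun s => pder2 ds g x s) t /\
    continuous (fun p : R * R => pder2 ds g (fst p) (snd p)) (x, t).

Inductive dir3 := Dx3 | Dt3 | Dxi3.

Fixpoint pder3 (ds : list dir3) (G : R -> R -> R -> R) : R -> R -> R -> R :=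
  match ds with
  | nil => G
  | d :: ds' =>
      let H := pder3 ds' G in
      match d with
      | Dx3 => fun x t e => Derive (fun y => H y t e) x
      | Dt3 => fun x t e => Derive (fun s => H x s e) t
      | Dxi3 => fun x t e => Derive (fun z => H x t z) e
      end
  end.

Definition smooth3_near (G : R -> R -> R -> R) (xi0 delta : R) : Prop :=
  forall ds x t eta, Rabs (eta - xi0) < delta ->
    ex_derive (fun y => pder3 ds G y t eta) x /\
    ex_derive (fun s => pder3 ds G x s eta) t /\
    ex_derive (fun z => pder3 ds G x t z) eta /\
    continuous (fun p : R * R * R => pder3 ds G (fst (fst p)) (snd (fst p)) (snd p))
      (x, t, eta).

Fixpoint sumR (n : nat) (g : nat -> R) : R :=
  match n with
  | O => 0
  | S k => sumR k g + g k
  end.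

Definition W (g h : R -> R -> R) : R -> R -> R :=
  fun x t => g x t * dx h x t - dx g x t * h x t.

Definition An (n : nat) (lam : R) (u : R -> R -> R) (phis : nat -> R -> R -> R)
  (lams : nat -> R) (psi : R -> R -> R) : R -> R -> R :=
  fun x t => dx u x t * psi x t + (4 * lam - 2 * u x t) * dx psi x t
    + sumR n (fun j => phis j x t / (lams j - lam) * W (phis j) psi x t).

Definition LaxSol (n : nat) (u : R -> R -> R) (phis : nat -> R -> R -> R)
  (lams : nat -> R) (lam : R) (psi : R -> R -> R) : Prop :=
  forall x t, dx (dx psi) x t + (lam + u x t) * psi x t = 0 /\
              dt psi x t = An n lam u phis lams psi x t.

Definition omega_ff (F : R -> R -> R -> R) (xi : R) : R -> R -> R :=
  fun x t => - W (fun y s => F y s xi) (fun y s => Derive (fun z => F y s z) xi) x t.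

(* Main.v *)
Require Import Defs.
From Stdlib Require Import Reals List Lra Lia.
From Coquelicot Require Import Coquelicot.
Open Scope R_scope.

Lemma cont_pair3 (a b c : R -> R -> R) x y :
  continuity_2d_pt a x y -> continuity_2d_pt b x y -> continuity_2d_pt c x y ->
  continuous (fun z : R * R => (a (fst z) (snd z), b (fst z) (snd z), c (fst z) (snd z))) (x, y).
Proof.
  intros Ha Hb Hc.
  apply continuity_2d_pt_filterlim in Ha.
  apply continuity_2d_pt_filterlim in Hb.
  apply continuity_2d_pt_filterlim in Hc.
  intros P [eps HP].
  assert (Ka := Ha (ball (a x y) eps) (locally_ball _ _)).
  assert (Kb := Hb (ball (b x y) eps) (locally_ball _ _)).
  assert (Kc := Hc (ball (c x y) eps) (locally_ball _ _)).
  unfold filtermap in Ka, Kb, Kc.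
  generalize (@filter_and _ (locally (x,y)) _ _ _ Ka (@filter_and _ (locally (x,y)) _ _ _ Kb Kc)).
  unfold filtermap. apply filter_imp. intros z [H1 [H2 H3]]. apply HP. split. split; assumption. assumption.
Qed.

Lemma cont_restr (G : R -> R -> R -> R) (a b c : R -> R -> R) x y :
  continuity_2d_pt a x y -> continuity_2d_pt b x y -> continuity_2d_pt c x y ->
  continuous (fun p : R * R * R => G (fst (fst p)) (snd (fst p)) (snd p)) (a x y, b x y, c x y) ->
  continuity_2d_pt (fun u v => G (a u v) (b u v) (c u v)) x y.
Proof.
  intros Ha Hb Hc HG.
  apply continuity_2d_pt_filterlim.
  apply (continuous_comp (fun z : R * R => (a (fst z) (snd z), b (fst z) (snd z), c (fst z) (snd z)))
     (fun p : R * R * R => G (fst (fst p)) (snd (fst p)) (snd p))).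
  apply cont_pair3; auto. exact HG.
Qed.

Lemma schwarz2 g (Hg : smooth2 g) x t : dt (dx g) x t = dx (dt g) x t.
Proof.
  unfold dt, dx. symmetry.
  apply (Schwarz g x t).
  - exists (mkposreal 1 Rlt_0_1). intros u v _ _.
    split; [exact (proj1 (Hg nil u v))|].
    split; [exact (proj1 (proj2 (Hg nil u v)))|].
    split; [exact (proj1 (Hg (false::nil) u v))|].
    exact (proj1 (proj2 (Hg (true::nil) u v))).
  - apply continuity_2d_pt_filterlim. exact (proj2 (proj2 (Hg (true::false::nil) x t))).
  - apply continuity_2d_pt_filterlim. exact (proj2 (proj2 (Hg (false::true::nil) x t))).
Qed.


Lemma sw3_xt F xi delta (HF : smooth3_near F xi delta) ds x t eta :
  Rabs (eta - xi) < delta ->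
  pder3 (Dx3::Dt3::ds) F x t eta = pder3 (Dt3::Dx3::ds) F x t eta.
Proof.
  intros Heta. simpl.
  apply (Schwarz (fun y s => pder3 ds F y s eta) x t).
  - exists (mkposreal 1 Rlt_0_1). intros u v _ _.
    split; [exact (proj1 (HF ds u v eta Heta))|].
    split; [exact (proj1 (proj2 (HF ds u v eta Heta)))|].
    split; [exact (proj1 (HF (Dt3::ds) u v eta Heta))|].
    exact (proj1 (proj2 (HF (Dx3::ds) u v eta Heta))).
  - apply (cont_restr (pder3 (Dx3::Dt3::ds) F) (fun u v => u) (fun u v => v) (fun _ _ => eta)).
    apply continuity_2d_pt_id1. apply continuity_2d_pt_id2. apply continuity_2d_pt_const.
    exact (proj2 (proj2 (proj2 (HF (Dx3::Dt3::ds) x t eta Heta)))).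
  - apply (cont_restr (pder3 (Dt3::Dx3::ds) F) (fun u v => u) (fun u v => v) (fun _ _ => eta)).
    apply continuity_2d_pt_id1. apply continuity_2d_pt_id2. apply continuity_2d_pt_const.
    exact (proj2 (proj2 (proj2 (HF (Dt3::Dx3::ds) x t eta Heta)))).
Qed.

Lemma near_delta xi delta eta v : Rabs (eta - xi) < delta ->
  Rabs (v - eta) < delta - Rabs (eta - xi) -> Rabs (v - xi) < delta.
Proof.
  intros H1 H2. 
  assert (Rabs (v - xi) <= Rabs (v - eta) + Rabs (eta - xi)).
  { replace (v - xi) with ((v - eta) + (eta - xi)) by ring. apply Rabs_triang. }
  lra.
Qed.

Lemma sw3_xxi F xi delta (HF : smooth3_near F xi delta) ds x t eta :
  Rabs (eta - xi) < delta ->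
  pder3 (Dx3::Dxi3::ds) F x t eta = pder3 (Dxi3::Dx3::ds) F x t eta.
Proof.
  intros Heta. simpl.
  assert (Hr : 0 < delta - Rabs (eta - xi)) by lra.
  apply (Schwarz (fun y z => pder3 ds F y t z) x eta).
  - exists (mkposreal _ Hr). intros u v _ Hv. simpl in Hv.
    assert (Hv' := near_delta xi delta eta v Heta Hv).
    split; [exact (proj1 (HF ds u t v Hv'))|].
    split; [exact (proj1 (proj2 (proj2 (HF ds u t v Hv'))))|].
    split; [exact (proj1 (HF (Dxi3::ds) u t v Hv'))|].
    exact (proj1 (proj2 (proj2 (HF (Dx3::ds) u t v Hv')))).
  - apply (cont_restr (pder3 (Dx3::Dxi3::ds) F) (fun u v => u) (fun _ _ => t) (fun u v => v)).
    apply continuity_2d_pt_id1. apply continuity_2d_pt_const. apply continuity_2d_pt_id2.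
    exact (proj2 (proj2 (proj2 (HF (Dx3::Dxi3::ds) x t eta Heta)))).
  - apply (cont_restr (pder3 (Dxi3::Dx3::ds) F) (fun u v => u) (fun _ _ => t) (fun u v => v)).
    apply continuity_2d_pt_id1. apply continuity_2d_pt_const. apply continuity_2d_pt_id2.
    exact (proj2 (proj2 (proj2 (HF (Dxi3::Dx3::ds) x t eta Heta)))).
Qed.

Lemma sw3_txi F xi delta (HF : smooth3_near F xi delta) ds x t eta :
  Rabs (eta - xi) < delta ->
  pder3 (Dt3::Dxi3::ds) F x t eta = pder3 (Dxi3::Dt3::ds) F x t eta.
Proof.
  intros Heta. simpl.
  assert (Hr : 0 < delta - Rabs (eta - xi)) by lra.
  apply (Schwarz (fun s z => pder3 ds F x s z) t eta).
  - exists (mkposreal _ Hr). intros u v _ Hv. simpl in Hv.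
    assert (Hv' := near_delta xi delta eta v Heta Hv).
    split; [exact (proj1 (proj2 (HF ds x u v Hv')))|].
    split; [exact (proj1 (proj2 (proj2 (HF ds x u v Hv'))))|].
    split; [exact (proj1 (proj2 (HF (Dxi3::ds) x u v Hv')))|].
    exact (proj1 (proj2 (proj2 (HF (Dt3::ds) x u v Hv')))).
  - apply (cont_restr (pder3 (Dt3::Dxi3::ds) F) (fun _ _ => x) (fun u v => u) (fun u v => v)).
    apply continuity_2d_pt_const. apply continuity_2d_pt_id1. apply continuity_2d_pt_id2.
    exact (proj2 (proj2 (proj2 (HF (Dt3::Dxi3::ds) x t eta Heta)))).
  - apply (cont_restr (pder3 (Dxi3::Dt3::ds) F) (fun _ _ => x) (fun u v => u) (fun u v => v)).
    apply continuity_2d_pt_const. apply continuity_2d_pt_id1. apply continuity_2d_pt_id2.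
    exact (proj2 (proj2 (proj2 (HF (Dxi3::Dt3::ds) x t eta Heta)))).
Qed.

Lemma is_derive_eqR (f : R -> R) x l l' : is_derive f x l' -> l' = l -> is_derive f x l.
Proof. intros H ->. exact H. Qed.

Lemma is_derive_Rplus (f g : R -> R) x df dg :
  is_derive f x df -> is_derive g x dg -> is_derive (fun y => f y + g y) x (df + dg).
Proof. intros. apply (is_derive_plus f g x df dg); assumption. Qed.

Lemma is_derive_sumR n (g : nat -> R -> R) (g' : nat -> R) x :
  (forall j, (j < n)%nat -> is_derive (g j) x (g' j)) ->
  is_derive (fun y => sumR n (fun j => g j y)) x (sumR n g').
Proof.
  induction n as [|k IH]; intros H; simpl.
  - apply (is_derive_const 0).
  - apply is_derive_Rplus. apply IH. intros; apply H; lia.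
    apply H; lia.
Qed.

Lemma sumR_ext n a b : (forall j, (j < n)%nat -> a j = b j) -> sumR n a = sumR n b.
Proof.
  induction n as [|k IH]; intros H; simpl. reflexivity.
  rewrite IH, H. reflexivity. lia. intros; apply H; lia.
Qed.

Lemma sumR_plus n a b : sumR n (fun j => a j + b j) = sumR n a + sumR n b.
Proof. induction n; simpl. ring. rewrite IHn. ring. Qed.

Lemma sumR_scal n c a : sumR n (fun j => c * a j) = c * sumR n a.
Proof. induction n; simpl. ring. rewrite IHn. ring. Qed.

Lemma is_derive_lnabs (g : R -> R) x d : is_derive g x d -> g x <> 0 ->
  is_derive (fun y => ln (Rabs (g y))) x (d / g x).
Proof.
  intros Hd Hn.
  assert (Ha : 0 < Rabs (g x)) by (apply Rabs_pos_lt; exact Hn).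
  eapply is_derive_eqR.
  apply (is_derive_comp ln (fun y => Rabs (g y)) x).
  apply is_derive_ln. exact Ha.
  apply is_derive_Rabs. exact Hd. exact Hn.
  simpl. unfold scal; simpl; unfold mult; simpl.
  destruct (Rlt_or_le 0 (g x)) as [Hp|Hp].
  - rewrite sign_eq_1 by exact Hp. rewrite Rabs_pos_eq by lra. field. exact Hn.
  - assert (g x < 0) by (destruct Hp; [assumption| contradiction]).
    rewrite sign_eq_m1 by assumption. rewrite Rabs_left by assumption. field. exact Hn.
Qed.

Lemma loc_delta xi delta (Hd : 0 < delta) (P : R -> Prop) :
  (forall z, Rabs (z - xi) < delta -> P z) -> locally xi P.
Proof. intros H. exists (mkposreal delta Hd). intros z Hz. apply H. exact Hz. Qed.

Lemma dxE (g : R -> R -> R) y s : Derive (fun z => g z s) y = dx g y s.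
Proof. reflexivity. Qed.
Lemma dtE (g : R -> R -> R) y s : Derive (fun z => g y z) s = dt g y s.
Proof. reflexivity. Qed.

Ltac exd := repeat match goal with
 | |- _ /\ _ => split
 | |- True => exact I
 | H : forall y s, ex_derive (fun y0 => ?g y0 s) y |- ex_derive (fun z => ?g z ?s) ?y => exact (H y s)
 | H : forall y s, ex_derive (fun s0 => ?g y s0) s |- ex_derive (fun z => ?g ?y z) ?s => exact (H y s)
 end.

Ltac nz := repeat match goal with
 | |- _ /\ _ => split
 | |- True => exact I
 | |- _ * _ <> 0 => apply Rmult_integral_contrapositive_currified
 | |- 1 <> 0 => exact R1_neq_R0
 | H : forall a b, _ <> 0 |- _ <> 0 => exact (H _ _)
 | H : _ <> 0 |- _ <> 0 => exact H
 end.

Theorem lemma2p1 (n : nat) (u : R -> R -> R) (phis : nat -> R -> R -> R)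
  (lams : nat -> R) (F : R -> R -> R -> R) (xi lam : R) (phi : R -> R -> R)
  (e : R -> R) :
  (1 <= n)%nat ->
  (forall i j, (i < n)%nat -> (j < n)%nat -> i <> j -> lams i <> lams j) ->
  smooth2 u ->
  (forall j, (j < n)%nat -> smooth2 (phis j)) ->
  (forall x t, dt u x t + 6 * u x t * dx u x t + dx (dx (dx u)) x t
                + 4 * sumR n (fun j => phis j x t * dx (phis j) x t) = 0) ->
  (forall j, (j < n)%nat -> forall x t,
      dx (dx (phis j)) x t + (lams j + u x t) * phis j x t = 0) ->
  (forall j, (j < n)%nat -> xi <> lams j) ->
  (exists delta, 0 < delta /\ smooth3_near F xi delta /\
     forall eta, Rabs (eta - xi) < delta ->
       LaxSol n u phis lams eta (fun x t => F x t eta)) ->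
  lam <> xi ->
  (forall j, (j < n)%nat -> lam <> lams j) ->
  smooth2 phi ->
  LaxSol n u phis lams lam phi ->
  (forall t, ex_derive e t) ->
  (forall x t, e t + omega_ff F xi x t <> 0) ->
  let f := fun x t => F x t xi in
  let D := fun x t => e t + omega_ff F xi x t in
  let wfp := fun x t => W f phi x t / (xi - lam) in
  let phibar := fun x t => phi x t - f x t * wfp x t / D x t in
  let ubar := fun x t => u x t + 2 * dx (dx (fun y s => ln (Rabs (D y s)))) x t in
  let phisbar := fun j x t =>
    phis j x t - f x t * (W f (phis j) x t / (xi - lams j)) / D x t in
  forall x t,
    dt phi x t - dt f x t * wfp x t / D x t
    + f x t * dt (omega_ff F xi) x t / (D x t) ^ 2 * wfp x t
    - f x t * dt wfp x t / D x t
    = An n lam ubar phisbar lams phibar x t.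
Proof.
  intros Hn Hdist Hu Hphis Hkdv Hphj Hxil Hex Hlx Hlj Hphi Hlax He HD f D wfp phibar ubar phisbar x t.
  destruct Hex as [delta [Hdel [HsF HLF]]].
  assert (H0 : Rabs (xi - xi) < delta) by (replace (xi - xi) with 0 by ring; rewrite Rabs_R0; exact Hdel).
  pose (h := fun y s => Derive (fun z => F y s z) xi).
  assert (EXx : forall ds y s, ex_derive (fun y => pder3 ds F y s xi) y)
    by (intros; exact (proj1 (HsF ds y s xi H0))).
  assert (EXt : forall ds y s, ex_derive (fun s => pder3 ds F y s xi) s)
    by (intros; exact (proj1 (proj2 (HsF ds y s xi H0)))).
  assert (EXz : forall ds y s, ex_derive (fun z => pder3 ds F y s z) xi)
    by (intros; exact (proj1 (proj2 (proj2 (HsF ds y s xi H0))))).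
  assert (Ef : forall y s, ex_derive (fun y => f y s) y) by (intros; exact (EXx nil y s)).
  assert (Efx : forall y s, ex_derive (fun y => dx f y s) y) by (intros; exact (EXx (Dx3::nil) y s)).
  assert (Eh : forall y s, ex_derive (fun y => h y s) y) by (intros; exact (EXx (Dxi3::nil) y s)).
  assert (Ehx : forall y s, ex_derive (fun y => dx h y s) y) by (intros; exact (EXx (Dx3::Dxi3::nil) y s)).
  assert (Eft : forall y s, ex_derive (fun s => f y s) s) by (intros; exact (EXt nil y s)).
  assert (Efxt : forall y s, ex_derive (fun s => dx f y s) s) by (intros; exact (EXt (Dx3::nil) y s)).
  assert (Eht : forall y s, ex_derive (fun s => h y s) s) by (intros; exact (EXt (Dxi3::nil) y s)).
  assert (Ehxt : forall y s, ex_derive (fun s => dx h y s) s) by (intros; exact (EXt (Dx3::Dxi3::nil) y s)).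
  assert (Eu : forall y s, ex_derive (fun y => u y s) y) by (intros; exact (proj1 (Hu nil y s))).
  assert (Eux : forall y s, ex_derive (fun y => dx u y s) y) by (intros; exact (proj1 (Hu (true::nil) y s))).
  assert (Ep : forall y s, ex_derive (fun y => phi y s) y) by (intros; exact (proj1 (Hphi nil y s))).
  assert (Epx : forall y s, ex_derive (fun y => dx phi y s) y) by (intros; exact (proj1 (Hphi (true::nil) y s))).
  assert (Ept : forall y s, ex_derive (fun s => phi y s) s) by (intros; exact (proj1 (proj2 (Hphi nil y s)))).
  assert (Epxt : forall y s, ex_derive (fun s => dx phi y s) s) by (intros; exact (proj1 (proj2 (Hphi (true::nil) y s)))).
  assert (Epj : forall j y s, (j < n)%nat -> ex_derive (fun y => phis j y s) y) by (intros; exact (proj1 (Hphis j H nil y s))).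
  assert (Epjx : forall j y s, (j < n)%nat -> ex_derive (fun y => dx (phis j) y s) y) by (intros; exact (proj1 (Hphis j H (true::nil) y s))).
  assert (Ffxx : forall y s, dx (dx f) y s = -(xi + u y s) * f y s).
  { intros y s. generalize (proj1 (HLF xi H0 y s)). change (dx (dx f) y s + (xi + u y s) * f y s = 0 -> dx (dx f) y s = -(xi + u y s) * f y s). intros; lra. }
  assert (Fpxx : forall y s, dx (dx phi) y s = -(lam + u y s) * phi y s).
  { intros y s. generalize (proj1 (Hlax y s)). intros; lra. }
  assert (Fpjxx : forall j y s, (j < n)%nat -> dx (dx (phis j)) y s = -(lams j + u y s) * phis j y s).
  { intros j y s Hj. generalize (Hphj j Hj y s). intros; lra. }
  assert (Fhxx : forall y s, dx (dx h) y s = - f y s - (xi + u y s) * h y s).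
  { intros y s.
    change (dx (dx h) y s) with (Derive (fun y0 => pder3 (Dx3::Dxi3::nil) F y0 s xi) y).
    rewrite (Derive_ext (fun y0 => pder3 (Dx3::Dxi3::nil) F y0 s xi) (fun y0 => pder3 (Dxi3::Dx3::nil) F y0 s xi))
      by (intros; apply (sw3_xxi F xi delta HsF nil); exact H0).
    change (pder3 (Dx3::Dxi3::Dx3::nil) F y s xi = - f y s - (xi + u y s) * h y s).
    rewrite (sw3_xxi F xi delta HsF (Dx3::nil)) by exact H0.
    change (Derive (fun z => pder3 (Dx3::Dx3::nil) F y s z) xi = - f y s - (xi + u y s) * h y s).
    rewrite (Derive_ext_loc _ (fun z => -(z + u y s) * F y s z)).
    2:{ apply (loc_delta xi delta Hdel). intros z Hz. generalize (proj1 (HLF z Hz y s)).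
        change (pder3 (Dx3::Dx3::nil) F y s z + (z + u y s) * F y s z = 0 -> pder3 (Dx3::Dx3::nil) F y s z = -(z + u y s) * F y s z).
        intros; lra. }
    apply is_derive_unique. auto_derive. exact (EXz nil y s).
    change (Derive (fun x0 => F y s x0) xi) with (h y s). change (F y s xi) with (f y s). ring. }
  assert (IDOm : forall y s, is_derive (fun y' => omega_ff F xi y' s) y (f y s ^ 2)).
  { intros y s. apply (is_derive_ext (fun y' => -(f y' s * dx h y' s - dx f y' s * h y' s))).
    intros; reflexivity. auto_derive; exd. rewrite !dxE, Fhxx, Ffxx. ring. }
  assert (IDD : forall y s, is_derive (fun y' => D y' s) y (f y s ^ 2)).
  { intros y s. apply (is_derive_ext (fun y' => e s + omega_ff F xi y' s)). intros; reflexivity.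
    eapply is_derive_eqR. apply is_derive_Rplus. apply (is_derive_const (e s)). apply IDOm.
    unfold zero; simpl. ring. }
  assert (ED : forall y s, ex_derive (fun y => D y s) y) by (intros; eexists; apply IDD).
  assert (DxD : forall y s, dx D y s = f y s ^ 2) by (intros; exact (is_derive_unique _ _ _ (IDD y s))).
  assert (DxL : forall y s, dx (fun y s => ln (Rabs (D y s))) y s = f y s ^ 2 / D y s).
  { intros y s. exact (is_derive_unique _ _ _ (is_derive_lnabs (fun y' => D y' s) y _ (IDD y s) (HD y s))). }
  assert (IDL2 : forall y s, is_derive (fun y' => dx (fun y s => ln (Rabs (D y s))) y' s) y
                   (2 * f y s * dx f y s / D y s - f y s ^ 4 / D y s ^ 2)).
  { intros y s. apply (is_derive_ext (fun y' => f y' s ^ 2 / D y' s)). intros; symmetry; apply DxL.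
    auto_derive; exd; nz. rewrite !dxE, DxD. field. exact (HD y s). }
  assert (IDL3 : forall y s, is_derive (fun y' => dx (dx (fun y s => ln (Rabs (D y s)))) y' s) y
                   (2 * (dx f y s ^ 2 + f y s * (-(xi + u y s) * f y s)) / D y s
                    - 2 * f y s * dx f y s * f y s ^ 2 / D y s ^ 2 - 4 * f y s ^ 3 * dx f y s / D y s ^ 2
                    + 2 * f y s ^ 4 * f y s ^ 2 / D y s ^ 3)).
  { intros y s. apply (is_derive_ext (fun y' => 2 * f y' s * dx f y' s / D y' s - f y' s ^ 4 / D y' s ^ 2)).
    intros; symmetry; exact (is_derive_unique _ _ _ (IDL2 t0 s)).
    auto_derive; exd; nz. rewrite !dxE, DxD, Ffxx. field. exact (HD y s). }
  assert (Hxl : xi - lam <> 0) by lra.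
  assert (Hjx : forall j, (j < n)%nat -> lams j - xi <> 0) by (intros j Hj; generalize (Hxil j Hj); lra).
  assert (Hxj : forall j, (j < n)%nat -> xi - lams j <> 0) by (intros j Hj; generalize (Hxil j Hj); lra).
  assert (Hjl : forall j, (j < n)%nat -> lams j - lam <> 0) by (intros j Hj; generalize (Hlj j Hj); lra).
  assert (DxL2 : forall y s, dx (dx (fun y s => ln (Rabs (D y s)))) y s = 2 * f y s * dx f y s / D y s - f y s ^ 4 / D y s ^ 2)
    by (intros; exact (is_derive_unique _ _ _ (IDL2 y s))).
  assert (DxL3 : forall y s, dx (dx (dx (fun y s => ln (Rabs (D y s))))) y s =
                   2 * (dx f y s ^ 2 + f y s * (-(xi + u y s) * f y s)) / D y s
                    - 2 * f y s * dx f y s * f y s ^ 2 / D y s ^ 2 - 4 * f y s ^ 3 * dx f y s / D y s ^ 2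
                    + 2 * f y s ^ 4 * f y s ^ 2 / D y s ^ 3)
    by (intros; exact (is_derive_unique _ _ _ (IDL3 y s))).
  assert (EL2 : forall y s, ex_derive (fun y => dx (dx (fun y s => ln (Rabs (D y s)))) y s) y)
    by (intros; eexists; apply IDL3).
  assert (Dxub : dx ubar x t = dx u x t + 2 * dx (dx (dx (fun y s => ln (Rabs (D y s))))) x t).
  { change (Derive (fun y => u y t + 2 * dx (dx (fun y s => ln (Rabs (D y s)))) y t) x = dx u x t + 2 * dx (dx (dx (fun y s => ln (Rabs (D y s))))) x t).
    apply is_derive_unique. auto_derive; exd. rewrite !dxE. ring. }
  assert (IDWfp : forall y s, is_derive (fun y' => W f phi y' s) y ((xi - lam) * f y s * phi y s)).
  { intros y s. change (is_derive (fun y' => f y' s * dx phi y' s - dx f y' s * phi y' s) y ((xi - lam) * f y s * phi y s)).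
    auto_derive; exd. rewrite !dxE, Fpxx, Ffxx. ring. }
  assert (IDwfp : forall y s, is_derive (fun y' => wfp y' s) y (f y s * phi y s)).
  { intros y s. change (is_derive (fun y' => W f phi y' s / (xi - lam)) y (f y s * phi y s)).
    assert (EW : forall y s, ex_derive (fun y' => W f phi y' s) y) by (intros; eexists; apply IDWfp).
    auto_derive; exd; nz. rewrite !dxE.
    replace (dx (W f phi) y s) with ((xi - lam) * f y s * phi y s) by (symmetry; exact (is_derive_unique _ _ _ (IDWfp y s))). field. exact Hxl. }
  assert (Ewfp : forall y s, ex_derive (fun y => wfp y s) y) by (intros; eexists; apply IDwfp).
  assert (Dxwfp : forall y s, dx wfp y s = f y s * phi y s) by (intros; exact (is_derive_unique _ _ _ (IDwfp y s))).
  assert (Dxpb : dx phibar x t = dx phi x t - (dx f x t * wfp x t + f x t * (f x t * phi x t)) / D x t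
                    + f x t * wfp x t * f x t ^ 2 / D x t ^ 2).
  { change (Derive (fun y => phi y t - f y t * wfp y t / D y t) x = dx phi x t - (dx f x t * wfp x t + f x t * (f x t * phi x t)) / D x t
                    + f x t * wfp x t * f x t ^ 2 / D x t ^ 2).
    apply is_derive_unique. auto_derive; exd; nz. rewrite !dxE, Dxwfp, DxD. field. nz. }
  assert (Dxpjb : forall j, (j < n)%nat -> dx (phisbar j) x t = dx (phis j) x t
                    - (dx f x t * (W f (phis j) x t / (xi - lams j)) + f x t ^ 2 * phis j x t) / D x t
                    + f x t ^ 3 * (W f (phis j) x t / (xi - lams j)) / D x t ^ 2).
  { intros j Hj. pose proof (fun y s => Epj j y s Hj) as Ej. pose proof (fun y s => Epjx j y s Hj) as Ejx.
    assert (IDW : forall y s, is_derive (fun y' => W f (phis j) y' s) y ((xi - lams j) * f y s * phis j y s)).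
    { intros y s. change (is_derive (fun y' => f y' s * dx (phis j) y' s - dx f y' s * phis j y' s) y ((xi - lams j) * f y s * phis j y s)).
      auto_derive; exd. rewrite !dxE, (Fpjxx j y s Hj), Ffxx. ring. }
    assert (EW : forall y s, ex_derive (fun y' => W f (phis j) y' s) y) by (intros; eexists; apply IDW).
    change (Derive (fun y => phis j y t - f y t * (W f (phis j) y t / (xi - lams j)) / D y t) x = dx (phis j) x t
                    - (dx f x t * (W f (phis j) x t / (xi - lams j)) + f x t ^ 2 * phis j x t) / D x t
                    + f x t ^ 3 * (W f (phis j) x t / (xi - lams j)) / D x t ^ 2).
    pose proof (Hxj j Hj) as Hxj'.
    apply is_derive_unique. auto_derive; exd; nz. rewrite !dxE, DxD.
    replace (dx (W f (phis j)) x t) with ((xi - lams j) * f x t * phis j x t) by (symmetry; exact (is_derive_unique _ _ _ (IDW x t))). field. nz. }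
  assert (LPt : forall y s, dt phi y s = dx u y s * phi y s + (4 * lam - 2 * u y s) * dx phi y s
      + sumR n (fun j => phis j y s / (lams j - lam) * W (phis j) phi y s))
    by (intros; exact (proj2 (Hlax y s))).
  assert (LFt : forall y s, dt f y s = dx u y s * f y s + (4 * xi - 2 * u y s) * dx f y s
      + sumR n (fun j => phis j y s / (lams j - xi) * W (phis j) f y s))
    by (intros; exact (proj2 (HLF xi H0 y s))).
  assert (Pxt : dt (dx phi) x t = dx (dx u) x t * phi x t + dx u x t * dx phi x t - 2 * dx u x t * dx phi x t
      + (4 * lam - 2 * u x t) * (-(lam + u x t) * phi x t)
      + sumR n (fun j => dx (phis j) x t / (lams j - lam) * W (phis j) phi x t + phis j x t ^ 2 * phi x t)).
  { rewrite (schwarz2 phi Hphi x t).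
    change (Derive (fun y => dt phi y t) x = dx (dx u) x t * phi x t + dx u x t * dx phi x t - 2 * dx u x t * dx phi x t
      + (4 * lam - 2 * u x t) * (-(lam + u x t) * phi x t)
      + sumR n (fun j => dx (phis j) x t / (lams j - lam) * W (phis j) phi x t + phis j x t ^ 2 * phi x t)).
    rewrite (Derive_ext _ (fun y => dx u y t * phi y t + (4 * lam - 2 * u y t) * dx phi y t
      + sumR n (fun j => phis j y t / (lams j - lam) * W (phis j) phi y t))) by (intros; apply LPt).
    apply is_derive_unique. apply is_derive_Rplus.
    - auto_derive; exd. rewrite !dxE, Fpxx. ring.
    - apply (is_derive_sumR n (fun j y => phis j y t / (lams j - lam) * W (phis j) phi y t)).
      intros j Hj. pose proof (fun y s => Epj j y s Hj) as Ej. pose proof (fun y s => Epjx j y s Hj) as Ejx.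
      pose proof (Hjl j Hj) as Hjl'.
      change (is_derive (fun y => phis j y t / (lams j - lam) * (phis j y t * dx phi y t - dx (phis j) y t * phi y t)) x
        (dx (phis j) x t / (lams j - lam) * (phis j x t * dx phi x t - dx (phis j) x t * phi x t) + phis j x t ^ 2 * phi x t)).
      auto_derive; exd; nz. rewrite !dxE, Fpxx, (Fpjxx j x t Hj). field. exact Hjl'. }
  assert (Fxt : dt (dx f) x t = dx (dx u) x t * f x t + dx u x t * dx f x t - 2 * dx u x t * dx f x t
      + (4 * xi - 2 * u x t) * (-(xi + u x t) * f x t)
      + sumR n (fun j => dx (phis j) x t / (lams j - xi) * W (phis j) f x t + phis j x t ^ 2 * f x t)).
  { change (dt (dx f) x t) with (pder3 (Dt3::Dx3::nil) F x t xi).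
    rewrite <- (sw3_xt F xi delta HsF nil x t xi H0).
    change (Derive (fun y => dt f y t) x = dx (dx u) x t * f x t + dx u x t * dx f x t - 2 * dx u x t * dx f x t
      + (4 * xi - 2 * u x t) * (-(xi + u x t) * f x t)
      + sumR n (fun j => dx (phis j) x t / (lams j - xi) * W (phis j) f x t + phis j x t ^ 2 * f x t)).
    rewrite (Derive_ext _ (fun y => dx u y t * f y t + (4 * xi - 2 * u y t) * dx f y t
      + sumR n (fun j => phis j y t / (lams j - xi) * W (phis j) f y t))) by (intros; apply LFt).
    apply is_derive_unique. apply is_derive_Rplus.
    - auto_derive; exd. rewrite !dxE, Ffxx. ring.
    - apply (is_derive_sumR n (fun j y => phis j y t / (lams j - xi) * W (phis j) f y t)).
      intros j Hj. pose proof (fun y s => Epj j y s Hj) as Ej. pose proof (fun y s => Epjx j y s Hj) as Ejx.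
      pose proof (Hjx j Hj) as Hjx'.
      change (is_derive (fun y => phis j y t / (lams j - xi) * (phis j y t * dx f y t - dx (phis j) y t * f y t)) x
        (dx (phis j) x t / (lams j - xi) * (phis j x t * dx f x t - dx (phis j) x t * f x t) + phis j x t ^ 2 * f x t)).
      auto_derive; exd; nz. rewrite !dxE, Ffxx, (Fpjxx j x t Hj). field. exact Hjx'. }
  assert (hE : forall y s, Derive (fun z => F y s z) xi = h y s) by (intros; reflexivity).
  assert (hxE : forall y s, Derive (fun z => Derive (fun y0 => F y0 s z) y) xi = dx h y s).
  { intros y s. change (pder3 (Dxi3::Dx3::nil) F y s xi = pder3 (Dx3::Dxi3::nil) F y s xi).
    symmetry. exact (sw3_xxi F xi delta HsF nil y s xi H0). }
  assert (Ht : forall y s, dt h y s = dx u y s * h y s + 4 * dx f y s + (4 * xi - 2 * u y s) * dx h y s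
      + sumR n (fun j => phis j y s / (lams j - xi) ^ 2 * W (phis j) f y s + phis j y s / (lams j - xi) * W (phis j) h y s)).
  { intros y s. change (dt h y s) with (pder3 (Dt3::Dxi3::nil) F y s xi).
    rewrite (sw3_txi F xi delta HsF nil y s xi H0).
    change (pder3 (Dxi3::Dt3::nil) F y s xi) with (Derive (fun z => pder3 (Dt3::nil) F y s z) xi).
    rewrite (Derive_ext_loc _ (fun z => dx u y s * F y s z + (4 * z - 2 * u y s) * pder3 (Dx3::nil) F y s z
       + sumR n (fun j => phis j y s / (lams j - z) * (phis j y s * pder3 (Dx3::nil) F y s z - dx (phis j) y s * F y s z)))).
    2:{ apply (loc_delta xi delta Hdel). intros z Hz. exact (proj2 (HLF z Hz y s)). }
    apply is_derive_unique. apply is_derive_Rplus.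
    - auto_derive. split. exact (EXz nil y s). split. exact (EXz (Dx3::nil) y s). exact I.
      rewrite hE, hxE. change (Derive (fun y0 => F y0 s xi) y) with (dx f y s). ring.
    - apply (is_derive_sumR n (fun j z => phis j y s / (lams j - z) * (phis j y s * pder3 (Dx3::nil) F y s z - dx (phis j) y s * F y s z))).
      intros j Hj. pose proof (Hjx j Hj) as Hjx'.
      auto_derive. repeat split. all: try exact Hjx'. all: try lazymatch goal with |- ex_derive (fun _ => Derive _ _) _ => exact (EXz (Dx3::nil) y s) | |- ex_derive _ _ => exact (EXz nil y s) end.
      rewrite hE, hxE. change (Derive (fun y0 => F y0 s xi) y) with (dx f y s). change (F y s xi) with (f y s).
      unfold W. field. exact Hjx'. }
  assert (Hxt : dt (dx h) x t = dx (dx u) x t * h x t + dx u x t * dx h x t + 4 * (-(xi + u x t) * f x t)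
      - 2 * dx u x t * dx h x t + (4 * xi - 2 * u x t) * (- f x t - (xi + u x t) * h x t)
      + sumR n (fun j => dx (phis j) x t / (lams j - xi) ^ 2 * W (phis j) f x t
                 + dx (phis j) x t / (lams j - xi) * W (phis j) h x t + phis j x t ^ 2 * h x t)).
  { change (dt (dx h) x t) with (pder3 (Dt3::Dx3::Dxi3::nil) F x t xi).
    rewrite <- (sw3_xt F xi delta HsF (Dxi3::nil) x t xi H0).
    change (pder3 (Dx3::Dt3::Dxi3::nil) F x t xi) with (Derive (fun y => dt h y t) x).
    rewrite (Derive_ext _ (fun y => dx u y t * h y t + 4 * dx f y t + (4 * xi - 2 * u y t) * dx h y t
      + sumR n (fun j => phis j y t / (lams j - xi) ^ 2 * W (phis j) f y t + phis j y t / (lams j - xi) * W (phis j) h y t)))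
      by (intros; apply Ht).
    apply is_derive_unique. apply is_derive_Rplus.
    - auto_derive; exd. rewrite !dxE, Ffxx, Fhxx. ring.
    - apply (is_derive_sumR n (fun j y => phis j y t / (lams j - xi) ^ 2 * W (phis j) f y t + phis j y t / (lams j - xi) * W (phis j) h y t)).
      intros j Hj. pose proof (fun y s => Epj j y s Hj) as Ej. pose proof (fun y s => Epjx j y s Hj) as Ejx.
      pose proof (Hjx j Hj) as Hjx'.
      change (is_derive (fun y => phis j y t / (lams j - xi) ^ 2 * (phis j y t * dx f y t - dx (phis j) y t * f y t)
            + phis j y t / (lams j - xi) * (phis j y t * dx h y t - dx (phis j) y t * h y t)) x
        (dx (phis j) x t / (lams j - xi) ^ 2 * (phis j x t * dx f x t - dx (phis j) x t * f x t)
                 + dx (phis j) x t / (lams j - xi) * (phis j x t * dx h x t - dx (phis j) x t * h x t) + phis j x t ^ 2 * h x t)).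
      auto_derive; exd; nz. rewrite !dxE, Ffxx, Fhxx, (Fpjxx j x t Hj). field. exact Hjx'. }
  assert (Omt : dt (omega_ff F xi) x t = -(dt f x t * dx h x t + f x t * dt (dx h) x t - dt (dx f) x t * h x t - dx f x t * dt h x t)).
  { change (Derive (fun s => -(f x s * dx h x s - dx f x s * h x s)) t = -(dt f x t * dx h x t + f x t * dt (dx h) x t - dt (dx f) x t * h x t - dx f x t * dt h x t)).
    apply is_derive_unique. auto_derive; exd. rewrite !dtE. ring. }
  assert (Wt : dt wfp x t = (dt f x t * dx phi x t + f x t * dt (dx phi) x t - dt (dx f) x t * phi x t - dx f x t * dt phi x t) / (xi - lam)).
  { change (Derive (fun s => (f x s * dx phi x s - dx f x s * phi x s) / (xi - lam)) t = (dt f x t * dx phi x t + f x t * dt (dx phi) x t - dt (dx f) x t * phi x t - dx f x t * dt phi x t) / (xi - lam)).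
    apply is_derive_unique. auto_derive; exd; nz. rewrite !dtE. field. exact Hxl. }
  rewrite Omt, Wt, Hxt, Fxt, Pxt, (LPt x t), (LFt x t), (Ht x t).
  change (An n lam ubar phisbar lams phibar x t) with (dx ubar x t * phibar x t + (4 * lam - 2 * ubar x t) * dx phibar x t
    + sumR n (fun j => phisbar j x t / (lams j - lam) * (phisbar j x t * dx phibar x t - dx (phisbar j) x t * phibar x t))).
  rewrite (sumR_ext n (fun j => phisbar j x t / (lams j - lam) * (phisbar j x t * dx phibar x t - dx (phisbar j) x t * phibar x t)) (fun j => (1 + f x t * dx f x t / ((xi - lam) * D x t)) * (phis j x t / (lams j - lam) * W (phis j) phi x t) + ((- wfp x t / D x t - f x t * dx h x t * wfp x t / D x t ^ 2 - f x t * dx phi x t / ((xi - lam) * D x t)) * (phis j x t / (lams j - xi) * W (phis j) f x t) + ((- f x t ^ 2 * wfp x t / D x t ^ 2) * (dx (phis j) x t / (lams j - xi) ^ 2 * W (phis j) f x t + dx (phis j) x t / (lams j - xi) * W (phis j) h x t + phis j x t ^ 2 * h x t) + ((f x t * h x t * wfp x t / D x t ^ 2 + f x t * phi x t / ((xi - lam) * D x t)) * (dx (phis j) x t / (lams j - xi) * W (phis j) f x t + phis j x t ^ 2 * f x t) + ((f x t * dx f x t * wfp x t / D x t ^ 2) * (phis j x t / (lams j - xi) ^ 2 * W (phis j) f x t + phis j x t / (lams j - xi) * W (phis j) h x t) + (- f x t ^ 2 / ((xi - lam) * D x t)) * (dx (phis j) x t / (lams j - lam) * W (phis j) phi x t +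 phis j x t ^ 2 * phi x t))))))).
  2:{ intros j Hj. cbv beta. rewrite Dxpb, (Dxpjb j Hj).
      pose proof (Hjx j Hj). pose proof (Hxj j Hj). pose proof (Hjl j Hj).
      change (phisbar j x t) with (phis j x t - f x t * (W f (phis j) x t / (xi - lams j)) / D x t).
      change (phibar x t) with (phi x t - f x t * wfp x t / D x t).
      change (wfp x t) with (W f phi x t / (xi - lam)).
      unfold W. field. nz. }
  rewrite Dxub, Dxpb, DxL3.
  change (ubar x t) with (u x t + 2 * dx (dx (fun y s => ln (Rabs (D y s)))) x t). rewrite DxL2.
  rewrite !sumR_plus, !sumR_scal, !sumR_plus.
  change (phibar x t) with (phi x t - f x t * wfp x t / D x t).
  change (wfp x t) with (W f phi x t / (xi - lam)).
  unfold W. field. nz.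
Qed.
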